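(* Let $\mathcal{A}$ be a $\sigma$-algebra on a set $X$ and let $\mathcal{F},\mathcal{G}$ be $\sigma$-algebras on a set $U$. The following are equivalent: (i) $(\mathcal{A}\otimes\mathcal{F})\cap(\mathcal{A}\otimes\mathcal{G})=\mathcal{A}\otimes(\mathcal{F}\cap\mathcal{G})$; (ii) there exist a $\sigma$-algebra $\mathcal{A}_0$ on $X$ and a $\sigma$-algebra $\mathcal{E}$ on $U$ such that $(\mathcal{A}\otimes\mathcal{F})\cap(\mathcal{A}\otimes\mathcal{G})=\mathcal{A}_0\otimes\mathcal{E}$.
   Context: For $\sigma$-algebras $\mathcal{A}$ on $X$ and $\mathcal{F}$ on $U$, $\mathcal{A}\otimes\mathcal{F}$ denotes the product $\sigma$-algebra on $X\times U$, i.e. the smallest $\sigma$-algebra containing all rectangles $A\times F$ with $A\in\mathcal{A}$, $F\in\mathcal{F}$. *)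

(* Defs.v *)
From HB Require Import structures.
From mathcomp Require Import all_boot all_order all_algebra.
From mathcomp Require Import all_classical all_reals all_analysis.
Set Implicit Arguments. Unset Strict Implicit. Unset Printing Implicit Defensive.
Local Open Scope classical_set_scope.

Definition prod_sigma (X U : Type) (A : set_system X) (F : set_system U)
  : set_system (X * U) :=
  <<s [set E | exists A1, exists F1, A A1 /\ F F1 /\ E = A1 `*` F1] >>.

(* Main.v *)
Require Import Defs.
From mathcomp Require Import all_boot all_order all_algebra.
From mathcomp Require Import all_classical all_reals all_analysis.
Local Open Scope classical_set_scope.

Section Aux.
Context (X U : Type).

Lemma sa_setI (F G : set_system U) : sigma_algebra setT F -> sigma_algebra setT G ->
  sigma_algebra setT (F `&` G).
Proof.
move=> [F0 FD FU] [G0 GD GU]; split.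
- by split.
- by move=> B [] /FD ? /GD ?; split.
- move=> B HB; split; [apply: FU => n; exact: (HB n).1 | apply: GU => n; exact: (HB n).2].
Qed.

Lemma prod_mono (A A' : set_system X) (F F' : set_system U) :
  A `<=` A' -> F `<=` F' -> prod_sigma A F `<=` prod_sigma A' F'.
Proof.
move=> AA FF; apply: smallest_sub; first exact: smallest_sigma_algebra.
move=> E [A1 [F1 [HA [HF ->]]]]; apply: sub_gen_smallest.
by exists A1, F1; split; [apply: AA|split; [apply: FF|]].
Qed.

Lemma xsec (A : set_system X) (F : set_system U) (x : X) :
  sigma_algebra setT F -> forall S, prod_sigma A F S -> F [set u | S (x, u)].
Proof.
move=> [F0 FD FU].
have : sigma_algebra setT [set S : set (X * U) | F [set u | S (x, u)]].
  split => /=.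
  - by rewrite (_ : [set u | set0 (x, u)] = set0).
  - move=> S HS; have -> : [set u | (setT `\` S) (x, u)] = setT `\` [set u | S (x, u)].
      by apply/seteqP; split => u /=.
    exact: FD.
  - move=> S HS; have -> : [set u | (\bigcup_k S k) (x, u)] = \bigcup_k [set u | S k (x, u)].
      by apply/seteqP; split => u /=.
    exact: FU.
move=> Hs; apply: smallest_sub => //.
move=> E [A1 [F1 [HA [HF ->]]]] /=.
have [xA|xA] := pselect (A1 x).
- by have -> : [set u | (A1 `*` F1) (x, u)] = F1 by apply/seteqP; split => u /=; [case|].
- by have -> : [set u | (A1 `*` F1) (x, u)] = set0 by apply/seteqP; split => u //= [].
Qed.

Lemma ysec (A : set_system X) (F : set_system U) (u : U) :
  sigma_algebra setT A -> forall S, prod_sigma A F S -> A [set x | S (x, u)].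
Proof.
move=> [F0 FD FU].
have : sigma_algebra setT [set S : set (X * U) | A [set x | S (x, u)]].
  split => /=.
  - by rewrite (_ : [set x | set0 (x, u)] = set0).
  - move=> S HS; have -> : [set x | (setT `\` S) (x, u)] = setT `\` [set x | S (x, u)].
      by apply/seteqP; split => x /=.
    exact: FD.
  - move=> S HS; have -> : [set x | (\bigcup_k S k) (x, u)] = \bigcup_k [set x | S k (x, u)].
      by apply/seteqP; split => x /=.
    exact: FU.
move=> Hs; apply: smallest_sub => //.
move=> E [A1 [F1 [HA [HF ->]]]] /=.
have [xA|xA] := pselect (F1 u).
- by have -> : [set x | (A1 `*` F1) (x, u)] = A1 by apply/seteqP; split => x /=; [case|].
- by have -> : [set x | (A1 `*` F1) (x, u)] = set0 by apply/seteqP; split => x //= [].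
Qed.

End Aux.

Theorem lemma2p4 (X U : Type) (A : set_system X) (F G : set_system U)
  (hA : sigma_algebra setT A) (hF : sigma_algebra setT F)
  (hG : sigma_algebra setT G) :
  (prod_sigma A F `&` prod_sigma A G = prod_sigma A (F `&` G)) <->
  (exists (A0 : set_system X) (E : set_system U),
      sigma_algebra setT A0 /\ sigma_algebra setT E /\
      prod_sigma A F `&` prod_sigma A G = prod_sigma A0 E).
Proof.
split.
  move=> H; exists A, (F `&` G); split => //; split => //; exact: sa_setI.
move=> [A0 [E [hA0 [hE H]]]].
have sub1 : prod_sigma A (F `&` G) `<=` prod_sigma A F `&` prod_sigma A G.
  move=> S HS; split; [apply: (@prod_mono X U A A (F `&` G) F _ _ S HS) | apply: (@prod_mono X U A A (F `&` G) G _ _ S HS)] => // B [].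
have [[[x0 u0] _]|emp] := pselect (exists p : X * U, True).
- apply/seteqP; split => //.
  rewrite H; apply: prod_mono.
  + move=> A1 HA1.
    have HR : prod_sigma A0 E (A1 `*` setT).
      apply: sub_gen_smallest; exists A1, setT; split => //; split; last by [].
      by case: hE => E0 ED _; rewrite -setC0 -setTD; apply: ED.
    rewrite -H in HR; have := @ysec X U A F u0 hA _ HR.1.
    have -> // : [set x | (A1 `*` setT) (x, u0)] = A1.
    by apply/seteqP; split => x /=; [case|].
  + move=> E1 HE1.
    have HR : prod_sigma A0 E (setT `*` E1).
      apply: sub_gen_smallest; exists setT, E1; split; last by split.
      by case: hA0 => E0 ED _; rewrite -setC0 -setTD; apply: ED.
    rewrite -H in HR.
    have e : [set u | (setT `*` E1) (x0, u)] = E1 by apply/seteqP; split => u /=; [case|].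
    by split; rewrite -e; [apply: (@xsec X U A F x0 hF _ HR.1) | apply: (@xsec X U A G x0 hG _ HR.2)].
- have all0 : forall S : set (X * U), S = set0.
    by move=> S; apply/seteqP; split => // p _; apply: emp; exists p.
  have s0 : forall (B : set_system X) (C : set_system U), prod_sigma B C set0.
    by move=> B C P [[P0 _ _] _].
  apply/seteqP; split => S _; rewrite (all0 S) //; split; exact: s0.
Qed.
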